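(* Every SB-generated group has uncountable cofinality, i.e., it cannot be expressed as the union of a strictly increasing sequence $H_1\subsetneq H_2\subsetneq\cdots$ of subgroups.
   Context: A subset of a group $G$ is strongly bounded if it has finite diameter in every left-invariant metric on $G$; a group is SB-generated if it is generated by a strongly bounded subset. *)

(* Defs.v *)
From Stdlib Require Import Reals.
Open Scope R_scope.

Section Groups.
Variables (G : Type) (mul : G -> G -> G) (inv : G -> G) (e : G).

Definition is_group : Prop :=
  (forall x y z, mul x (mul y z) = mul (mul x y) z) /\
  (forall x, mul e x = x) /\ (forall x, mul x e = x) /\
  (forall x, mul (inv x) x = e) /\ (forall x, mul x (inv x) = e).

Definition is_subgroup (H : G -> Prop) : Prop :=
  H e /\ (forall x y, H x -> H y -> H (mul x y)) /\ (forall x, H x -> H (inv x)).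

Definition generated (A : G -> Prop) : G -> Prop :=
  fun g => forall H, is_subgroup H -> (forall a, A a -> H a) -> H g.

Definition is_metric (d : G -> G -> R) : Prop :=
  (forall x y, 0 <= d x y) /\
  (forall x y, d x y = 0 <-> x = y) /\
  (forall x y, d x y = d y x) /\
  (forall x y z, d x z <= d x y + d y z).

Definition left_invariant (d : G -> G -> R) : Prop :=
  forall g x y, d (mul g x) (mul g y) = d x y.

Definition finite_diameter (d : G -> G -> R) (A : G -> Prop) : Prop :=
  exists M : R, forall x y, A x -> A y -> d x y <= M.

Definition strongly_bounded (A : G -> Prop) : Prop :=
  forall d, is_metric d -> left_invariant d -> finite_diameter d A.

Definition SB_generated : Prop :=
  exists A : G -> Prop, strongly_bounded A /\ forall g, generated A g.

Definition uncountable_cofinality : Prop :=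
  ~ exists H : nat -> (G -> Prop),
      (forall n, is_subgroup (H n)) /\
      (forall n g, H n g -> H (S n) g) /\
      (forall n, exists g, H (S n) g /\ ~ H n g) /\
      (forall g, exists n, H n g).

End Groups.

Arguments is_group {G} mul inv e.
Arguments is_subgroup {G} mul inv e H.
Arguments generated {G} mul inv e A g.
Arguments left_invariant {G} mul d.
Arguments strongly_bounded {G} mul A.
Arguments SB_generated {G} mul inv e.
Arguments uncountable_cofinality {G} mul inv e.

(* Main.v *)
Require Import Defs.
From Stdlib Require Import Reals.
From Stdlib Require Import ClassicalEpsilon Classical Wf_nat Lra Lia ZArith.

Lemma least_exists (P : nat -> Prop) :
  (exists n, P n) -> exists n, P n /\ forall m, P m -> (n <= m)%nat.
Proof.
  intros Hex.
  destruct (dec_inh_nat_subset_has_unique_least_element P (fun n => classic (P n)) Hex)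
    as [n [[Pn Hl] _]].
  exists n; split; auto.
Qed.

Lemma nat_above (M : R) : exists n, M < INR n.
Proof.
  destruct (archimed M) as [H1 _].
  destruct (Z_le_gt_dec (up M) 0) as [Hz|Hz].
  - exists 0%nat. simpl. apply IZR_le in Hz. lra.
  - exists (Z.to_nat (up M)). rewrite INR_IZR_INZ, Z2Nat.id by lia. exact H1.
Qed.

Theorem proposition2p6 (G : Type) (mul : G -> G -> G) (inv : G -> G) (e : G)
  (HG : is_group mul inv e) :
  SB_generated mul inv e -> uncountable_cofinality mul inv e.
Proof.
  destruct HG as [Hassoc [Hel [Her [Hinvl Hinvr]]]].
  assert (Huniq : forall u v, mul u v = e -> v = inv u).
  { intros u v Huv.
    rewrite <- (Hel v), <- (Hinvl u), <- Hassoc, Huv, Her. reflexivity. }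
  assert (Hii : forall g, inv (inv g) = g).
  { intros g. symmetry. apply Huniq. apply Hinvl. }
  assert (Hinvm : forall a b, inv (mul a b) = mul (inv b) (inv a)).
  { intros a b. symmetry. apply Huniq.
    rewrite <- Hassoc, (Hassoc b), Hinvr, Hel, Hinvr. reflexivity. }
  intros [A [HSB Hgen]] [H [Hsub [Hinc [Hstrict Hcov]]]].
  assert (Hmono : forall n m g, (n <= m)%nat -> H n g -> H m g).
  { intros n m g Hnm. induction Hnm; auto. }
  assert (HN : exists N, forall a, A a -> H N a).
  2:{ destruct HN as [N HN].
      destruct (Hstrict N) as [g [_ Hg]]. apply Hg.
      apply (Hgen g (H N) (Hsub N) HN). }
  destruct (classic (exists a0, A a0)) as [[a0 Ha0]|Hno].
  2:{ exists 0%nat. intros a Ha. exfalso. eauto. }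
  set (ell := fun g => epsilon (inhabits 0%nat)
                (fun n => H n g /\ forall m, H m g -> (n <= m)%nat)).
  assert (Hell : forall g, H (ell g) g /\ forall m, H m g -> (ell g <= m)%nat).
  { intros g. unfold ell. apply epsilon_spec. apply least_exists. apply Hcov. }
  assert (HellM : forall g h, (ell (mul g h) <= Nat.max (ell g) (ell h))%nat).
  { intros g h. apply Hell. apply Hsub.
    - apply (Hmono (ell g)); [lia|apply Hell].
    - apply (Hmono (ell h)); [lia|apply Hell]. }
  assert (Hellinv : forall g, ell (inv g) = ell g).
  { assert (Hle : forall g, (ell (inv g) <= ell g)%nat).
    { intros g. apply Hell. apply Hsub. apply Hell. }
    intros g. apply Nat.le_antisymm; auto.
    rewrite <- (Hii g) at 1. auto. }
  set (d := fun x y => if excluded_middle_informative (x = y) then 0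
                       else INR (ell (mul (inv x) y)) + 1).
  assert (Hpos : forall n, 0 <= INR n) by apply pos_INR.
  assert (Hmet : is_metric G d).
  { unfold d; split; [|split; [|split]].
    - intros x y. destruct excluded_middle_informative; [lra|].
      specialize (Hpos (ell (mul (inv x) y))). lra.
    - intros x y. split.
      + destruct excluded_middle_informative; auto.
        specialize (Hpos (ell (mul (inv x) y))). intros. lra.
      + intros E. destruct excluded_middle_informative; [lra|congruence].
    - intros x y. destruct excluded_middle_informative as [E|E];
        destruct excluded_middle_informative as [E'|E']; subst; try congruence;
      try (rewrite <- (Hellinv (mul (inv x) y)), Hinvm, Hii; reflexivity).
    - intros x y z.
      destruct (excluded_middle_informative (x = z)) as [E1|E1].
      { destruct excluded_middle_informative;
        destruct excluded_middle_informative; try lra;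
        pose proof (Hpos (ell (mul (inv x) y)));
        pose proof (Hpos (ell (mul (inv y) z))); lra. }
      destruct (excluded_middle_informative (x = y)) as [E2|E2].
      { subst. repeat destruct excluded_middle_informative; try congruence; lra. }
      destruct (excluded_middle_informative (y = z)) as [E3|E3].
      { subst. repeat destruct excluded_middle_informative; try congruence; lra. }
      assert (Hc : mul (inv x) z = mul (mul (inv x) y) (mul (inv y) z)).
      { rewrite <- Hassoc, (Hassoc y), Hinvr, Hel. reflexivity. }
      rewrite Hc.
      pose proof (HellM (mul (inv x) y) (mul (inv y) z)) as Hm.
      assert (Hm2 : (ell (mul (mul (inv x) y) (mul (inv y) z)) <=
                     ell (mul (inv x) y) + ell (mul (inv y) z))%nat) by lia.
      apply le_INR in Hm2. rewrite plus_INR in Hm2.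
      specialize (Hpos (ell (mul (inv x) y))). lra. }
  assert (Hli : left_invariant mul d).
  { intros g x y. unfold d.
    assert (Hc : mul (inv (mul g x)) (mul g y) = mul (inv x) y).
    { rewrite Hinvm, <- Hassoc, (Hassoc (inv g)), Hinvl, Hel. reflexivity. }
    rewrite Hc.
    destruct (excluded_middle_informative (mul g x = mul g y)) as [E|E];
      destruct (excluded_middle_informative (x = y)) as [E'|E']; auto.
    - exfalso. apply E'.
      rewrite <- (Hel x), <- (Hel y), <- (Hinvl g), <- !Hassoc, E. reflexivity.
    - exfalso. apply E. rewrite E'. reflexivity. }
  destruct (HSB d Hmet Hli) as [M HM].
  destruct (nat_above M) as [k Hk].
  exists (Nat.max k (ell a0)).
  intros a Ha.
  assert (Ha' : a = mul a0 (mul (inv a0) a)).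
  { rewrite Hassoc, Hinvr, Hel. reflexivity. }
  destruct (classic (a0 = a)) as [Eq|Neq].
  { subst. apply (Hmono (ell a)); [lia|apply Hell]. }
  rewrite Ha'. apply Hsub.
  - apply (Hmono (ell a0)); [lia|apply Hell].
  - apply (Hmono (ell (mul (inv a0) a))); [|apply Hell].
    specialize (HM a0 a Ha0 Ha). unfold d in HM.
    destruct excluded_middle_informative; [congruence|].
    assert (INR (ell (mul (inv a0) a)) < INR k) by lra.
    apply INR_lt in H0. lia.
Qed.
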